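(* Let $i,n$ be natural numbers and let $(A,+,\circ)$ be a brace of cardinality $p^n$, where $p$ is a prime with $p>n+1$. Then $p^iA=\{p^ia: a\in A\}$ is an ideal of $A$. Moreover $A^{\circ p^i}=p^iA$, where $A^{\circ p^i}$ is the subgroup of $(A,\circ)$ generated by the elements $a^{\circ p^i}=a\circ a\circ\cdots\circ a$ ($p^i$ factors), $a\in A$.
   Context: A (left) brace is a set $A$ with binary operations $+,\circ$ such that $(A,+)$ is an abelian group, $(A,\circ)$ is a group, and $a\circ(b+c)+a=a\circ b+a\circ c$ for all $a,b,c$. Write $a*b=a\circ b-a-b$. An ideal of a brace $A$ is a subgroup $I$ of $(A,+)$ which is a normal subgroup of $(A,\circ)$ and satisfies $a*x\in I$ for all $a\in A$, $x\in I$; equivalently, an additive subgroup $I$ with $A*I\subseteq I$ and $I*A\subseteq I$. $p^ia$ denotes the $p^i$-fold additive multiple of $a$. *)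

(* Defs.v *)
From HB Require Import structures.
From mathcomp Require Import all_boot all_algebra.
Set Implicit Arguments. Unset Strict Implicit. Unset Printing Implicit Defensive.
Import GRing.Theory.
Local Open Scope ring_scope.

Definition is_brace (A : finZmodType) (circ : A -> A -> A) (e : A)
    (cinv : A -> A) : Prop :=
  [/\ (forall a b c, circ a (circ b c) = circ (circ a b) c),
      (forall a, circ e a = a /\ circ a e = a),
      (forall a, circ (cinv a) a = e /\ circ a (cinv a) = e) &
      (forall a b c, circ a (b + c) + a = circ a b + circ a c)].

Definition bstar (A : finZmodType) (circ : A -> A -> A) (a b : A) : A :=
  circ a b - a - b.

Definition is_add_subgroup (A : finZmodType) (I : {set A}) : Prop :=
  0 \in I /\ (forall x y, x \in I -> y \in I -> x - y \in I).

Definition is_circ_subgroup (A : finZmodType) (circ : A -> A -> A) (e : A)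
    (cinv : A -> A) (S : {set A}) : bool :=
  [&& e \in S, [forall x in S, [forall y in S, circ x y \in S]] &
      [forall x in S, cinv x \in S]].

Definition is_circ_normal (A : finZmodType) (circ : A -> A -> A) (e : A)
    (cinv : A -> A) (S : {set A}) : Prop :=
  is_circ_subgroup circ e cinv S /\
  (forall a x, x \in S -> circ (circ a x) (cinv a) \in S).

Definition is_ideal (A : finZmodType) (circ : A -> A -> A) (e : A)
    (cinv : A -> A) (I : {set A}) : Prop :=
  [/\ is_add_subgroup I, is_circ_normal circ e cinv I &
      (forall a x, x \in I -> bstar circ a x \in I)].

Definition circ_gen (A : finZmodType) (circ : A -> A -> A) (e : A)
    (cinv : A -> A) (G : {set A}) : {set A} :=
  [set x | [forall S : {set A},
              (is_circ_subgroup circ e cinv S && (G \subset S)) ==> (x \in S)]].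

Definition circ_pow (A : finZmodType) (circ : A -> A -> A) (e : A)
    (a : A) (m : nat) : A := iter m (circ a) e.

Definition mult_set (A : finZmodType) (m : nat) : {set A} :=
  [set a *+ m | a : A].

(* Main.v *)
Require Import Defs.
From HB Require Import structures.
From mathcomp Require Import all_boot all_algebra.
From mathcomp Require Import fingroup action pgroup cyclic sylow.
From mathcomp Require Import zify.
Set Implicit Arguments. Unset Strict Implicit. Unset Printing Implicit Defensive.
Import GRing.Theory FinRing.Theory.
Local Open Scope ring_scope.

Definition bgT (A : finZmodType) (circ : A -> A -> A) (e : A) (cinv : A -> A)
  (h : is_brace circ e cinv) : Type := A.

Section BG.
Variables (A : finZmodType) (circ : A -> A -> A) (e : A) (cinv : A -> A)
  (h : is_brace circ e cinv).
Lemma bg_mulgA : associative (circ : bgT h -> bgT h -> bgT h).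
Proof. by have [H _ _ _] := h. Qed.
Lemma bg_mul1g : left_id (e : bgT h) circ.
Proof. by have [_ H _ _] := h; move=> x; case: (H x). Qed.
Lemma bg_mulVg : left_inverse (e : bgT h) cinv circ.
Proof. by have [_ _ H _] := h; move=> x; case: (H x). Qed.
End BG.

HB.instance Definition _ A circ e cinv h := Finite.copy (@bgT A circ e cinv h) A.
HB.instance Definition _ A circ e cinv h :=
  Finite_isGroup.Build (@bgT A circ e cinv h) (@bg_mulgA A circ e cinv h)
    (@bg_mul1g A circ e cinv h) (@bg_mulVg A circ e cinv h).

Section Main.
Variables (A : finZmodType) (circ : A -> A -> A) (e : A) (cinv : A -> A).
Hypothesis hB : is_brace circ e cinv.

Lemma circA a b c : circ a (circ b c) = circ (circ a b) c.
Proof. by case: hB. Qed.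
Lemma circ1 a : circ e a = a.
Proof. by case: hB => _ H _ _; case: (H a). Qed.
Lemma circ1r a : circ a e = a.
Proof. by case: hB => _ H _ _; case: (H a). Qed.
Lemma circV a : circ (cinv a) a = e.
Proof. by case: hB => _ _ H _; case: (H a). Qed.
Lemma circVr a : circ a (cinv a) = e.
Proof. by case: hB => _ _ H _; case: (H a). Qed.
Lemma circD a b c : circ a (b + c) + a = circ a b + circ a c.
Proof. by case: hB. Qed.

Lemma circ0 a : circ a 0 = a.
Proof. by have := circD a 0 0; rewrite addr0 => /addrI H; rewrite -H. Qed.

Lemma e0 : e = 0.
Proof. by rewrite -(circ1 0) circ0. Qed.

Lemma inv_uniq a b : circ a b = e -> b = cinv a.
Proof. by move=> H; rewrite -(circ1 b) -(circV a) -circA H circ1r. Qed.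

Lemma cinvK a : cinv (cinv a) = a.
Proof. by apply/esym/inv_uniq; rewrite circV. Qed.

Lemma cinv_circ a b : cinv (circ a b) = circ (cinv b) (cinv a).
Proof.
apply/esym/inv_uniq.
by rewrite -circA (circA b) circVr circ1 circVr.
Qed.

Definition lam_def a b := circ a b - a.
Fact lam_key : unit. Proof. exact: tt. Qed.
Definition lam := locked_with lam_key lam_def.
Lemma lamU a b : lam a b = circ a b - a. Proof. by rewrite /lam unlock. Qed.

Lemma circE a b : circ a b = a + lam a b.
Proof. by rewrite lamU addrCA subrr addr0. Qed.

Lemma lamD a x y : lam a (x + y) = lam a x + lam a y.
Proof.
rewrite !lamU -[circ a (x + y)](addrK a) circD.
by rewrite addrACA addrA.
Qed.

Lemma lam0 a : lam a 0 = 0.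
Proof. by rewrite lamU circ0 subrr. Qed.

Lemma lamN a x : lam a (- x) = - lam a x.
Proof. by apply/eqP; rewrite -subr_eq0 opprK -lamD addNr lam0. Qed.

Lemma lamB a x y : lam a (x - y) = lam a x - lam a y.
Proof. by rewrite lamD lamN. Qed.

Lemma lamMn a x k : lam a (x *+ k) = lam a x *+ k.
Proof. by elim: k => [|k IH]; rewrite ?mulr0n ?lam0 // !mulrS lamD IH. Qed.

Lemma lamM a b x : lam (circ a b) x = lam a (lam b x).
Proof. by rewrite [lam b x]lamU lamB !lamU -circA opprB addrA subrK. Qed.

Lemma lam1 x : lam e x = x.
Proof. by rewrite lamU circ1 e0 subr0. Qed.

Lemma lam0l x : lam 0 x = x.
Proof. by rewrite -e0 lam1. Qed.

Lemma lamK a x : lam (cinv a) (lam a x) = x.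
Proof. by rewrite -lamM circV lam1. Qed.

Lemma lamKV a x : lam a (lam (cinv a) x) = x.
Proof. by rewrite -lamM circVr lam1. Qed.

Lemma lam_inj a : injective (lam a).
Proof. exact: can_inj (lamK a). Qed.

Lemma addE x z : x + z = circ x (lam (cinv x) z).
Proof. by rewrite circE lamKV. Qed.

Notation star := (bstar circ).

Lemma starE a x : star a x = lam a x - x.
Proof. by rewrite /bstar lamU. Qed.

Lemma lamE a x : lam a x = x + star a x.
Proof. by rewrite starE addrCA subrr addr0. Qed.

Lemma starD a x y : star a (x + y) = star a x + star a y.
Proof. by rewrite !starE lamD opprD addrACA. Qed.

Lemma star0 a : star a 0 = 0.
Proof. by rewrite starE lam0 subr0. Qed.

Lemma starN a x : star a (- x) = - star a x.
Proof. by rewrite !starE lamN [RHS]opprB opprK addrC. Qed.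

Lemma starB a x y : star a (x - y) = star a x - star a y.
Proof. by rewrite starD starN. Qed.

Lemma starMn a x k : star a (x *+ k) = star a x *+ k.
Proof. by elim: k => [|k IH]; rewrite ?mulr0n ?star0 // !mulrS starD IH. Qed.

Lemma star0l x : star 0 x = 0.
Proof. by rewrite starE lam0l subrr. Qed.

Lemma starLam a c x : star (circ a c) x - star c x = star a (lam c x).
Proof. by rewrite !starE lamM opprB addrA subrK. Qed.

Lemma starCirc u w x : star (circ u w) x = lam u (star w x) + star u x.
Proof.
by rewrite !starE lamM lamB addrA subrK.
Qed.

Lemma conjE a x : circ (circ a x) (cinv a) = lam a (x + star x (cinv a)).
Proof.
have ha : - lam a (cinv a) = a.
  by apply/eqP; rewrite eq_sym -addr_eq0 -circE circVr e0.
rewrite [circ (circ a x) _]circE lamM [circ a x]circE lamD starE lamB ha.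
by rewrite [RHS]addrC -[RHS]addrA [RHS]addrC.
Qed.

Lemma mulgE (g k : bgT hB) : (g * k)%g = circ g k.
Proof. by []. Qed.
Lemma invgE (g : bgT hB) : (g^-1)%g = cinv g.
Proof. by []. Qed.


Lemma asg0 (S : {set A}) : is_add_subgroup S -> 0 \in S.
Proof. by case. Qed.
Lemma asgB (S : {set A}) x y : is_add_subgroup S -> x \in S -> y \in S -> x - y \in S.
Proof. by case=> _ H; apply: H. Qed.
Lemma asgN (S : {set A}) x : is_add_subgroup S -> x \in S -> - x \in S.
Proof. by move=> hS hx; rewrite -sub0r asgB // asg0. Qed.
Lemma asgD (S : {set A}) x y : is_add_subgroup S -> x \in S -> y \in S -> x + y \in S.
Proof. by move=> hS hx hy; rewrite -[y]opprK asgB // asgN. Qed.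
Lemma asgMn (S : {set A}) x k : is_add_subgroup S -> x \in S -> x *+ k \in S.
Proof. by move=> hS hx; elim: k => [|k IH]; rewrite ?mulr0n ?asg0 // mulrS asgD. Qed.
Lemma asg_sum (S : {set A}) (r : seq nat) (F : nat -> A) :
  is_add_subgroup S -> (forall t, F t \in S) -> \sum_(t <- r) F t \in S.
Proof.
move=> hS hF; elim: r => [|t r IH]; first by rewrite big_nil asg0.
by rewrite big_cons asgD.
Qed.
Lemma asg_sumP (S : {set A}) (r : seq nat) (P : pred nat) (F : nat -> A) :
  is_add_subgroup S -> (forall t, P t -> F t \in S) -> \sum_(t <- r | P t) F t \in S.
Proof.
move=> hS hF; elim: r => [|t r IH]; first by rewrite big_nil asg0.
rewrite big_cons; case: ifP => // Pt; by rewrite asgD // hF.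
Qed.
Lemma asgT : is_add_subgroup [set: A].
Proof. by split=> [|x y _ _]; rewrite inE. Qed.

Lemma inM m y : y *+ m \in mult_set A m.
Proof. by apply/imsetP; exists y; rewrite ?inE. Qed.
Lemma MP m x : reflect (exists y, x = y *+ m) (x \in mult_set A m).
Proof.
apply: (iffP imsetP) => [[y _ ->]|[y ->]]; first by exists y.
by exists y; rewrite ?inE.
Qed.
Lemma asgM m : is_add_subgroup (mult_set A m).
Proof.
split; first by rewrite -(mul0rn _ m) inM.
by move=> x y /MP[x' ->] /MP[y' ->]; rewrite -mulrnBl inM.
Qed.
Lemma M_lam m c x : x \in mult_set A m -> lam c x \in mult_set A m.
Proof. by case/MP=> y ->; rewrite lamMn inM. Qed.
Lemma M_star m c x : x \in mult_set A m -> star c x \in mult_set A m.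
Proof. by case/MP=> y ->; rewrite starMn inM. Qed.
Lemma M1 x : x \in mult_set A 1.
Proof. by rewrite -[x]mulr1n inM. Qed.

Fixpoint Jset (k : nat) : {set A} :=
  if k is k'.+1 then [set x | [forall a, star a x \in Jset k']] else [set 0].

Lemma inJ0 x : (x \in Jset 0) = (x == 0).
Proof. by rewrite /= inE. Qed.
Lemma inJSP k x : reflect (forall a, star a x \in Jset k) (x \in Jset k.+1).
Proof. by rewrite /= inE; apply: forallP. Qed.

Lemma asgJ k : is_add_subgroup (Jset k).
Proof.
elim: k => [|k IH].
  by split; [rewrite inJ0 | move=> x y; rewrite !inJ0 => /eqP-> /eqP->; rewrite subr0].
split; first by apply/inJSP => a; rewrite star0 asg0.
move=> x y /inJSP hx /inJSP hy; apply/inJSP => a.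
by rewrite starB; apply: asgB.
Qed.

Lemma J_lam k c x : x \in Jset k -> lam c x \in Jset k.
Proof.
elim: k x => [|k IH] x; first by rewrite !inJ0 => /eqP->; rewrite lam0.
move/inJSP=> hx; apply/inJSP => a.
by rewrite -starLam; apply: asgB; [exact: asgJ | exact: hx | exact: hx].
Qed.

Lemma J_mono k : Jset k \subset Jset k.+1.
Proof.
elim: k => [|k IH]; apply/subsetP => x.
  by rewrite inJ0 => /eqP->; apply/inJSP => a; rewrite star0 inJ0.
move/inJSP=> hx; apply/inJSP => a.
exact: (subsetP IH).
Qed.

Lemma J_le k l : (k <= l)%N -> Jset k \subset Jset l.
Proof.
move=> kl; rewrite -(subnK kl); elim: (l - k)%N => [|d IH] //.
exact: subset_trans IH (J_mono _).
Qed.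

Lemma iter_star_J y t k w : w \in Jset k -> iter t (star y) w \in Jset (k - t).
Proof.
move=> hw; elim: t => [|t IH]; first by rewrite subn0.
rewrite subnS /=; move: IH; case: (k - t)%N => [|j] /= H.
  by move: H; rewrite !inJ0 => /eqP->; rewrite star0.
by move/inJSP: H.
Qed.

Local Notation G := (bgT hB).

Definition toS (X : {set A}) (g : G) : {set A} := [set lam (cinv g) x | x in X].

Lemma toS_is_action : is_action [set: G] toS.
Proof.
split.
  move=> g X Y; rewrite /toS => /imset_inj H; apply: H.
  exact: lam_inj.
move=> X g k _ _; rewrite /act_morph /toS mulgE cinv_circ -imset_comp.
by apply: eq_imset => x /=; rewrite lamM.
Qed.

Definition toA := Action toS_is_action.

Lemma toA_E X g : toA X g = [set lam (cinv g) x | x in X].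
Proof. by []. Qed.

Lemma lam_set c (J : {set A}) :
  (forall x, x \in J -> lam c x \in J) -> [set lam c x | x in J] = J.
Proof.
move=> H; apply/eqP; rewrite eqEcard card_imset; last exact: lam_inj.
rewrite leqnn andbT; apply/subsetP => _ /imsetP[x hx ->]; exact: H.
Qed.

Lemma J_group k : group_set (Jset k).
Proof.
apply/group_setP; split; first exact: (asg0 (asgJ k)).
move=> x y hx hy; exact: (asgD (asgJ k) hx hy).
Qed.

Definition Jg k : {group A} := Group (J_group k).

Variables (p n : nat).
Hypotheses (pr : prime p) (pn : (n.+1 < p)%N) (cardA : #|A| = (p ^ n)%N).

Lemma pG : pgroup p [set: G].
Proof.
rewrite /pgroup.
have -> : #|[set: G]| = #|A| by rewrite cardsT.
by rewrite cardA pnatX pnat_id.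
Qed.

Local Open Scope group_scope.
Lemma J_grow k : Jset k != [set: A] -> exists2 b, b \in Jset k.+1 & b \notin Jset k.
Proof.
move=> hJ.
have Jl c : [set lam c x | x in Jset k] = Jset k by apply: lam_set => x; apply: J_lam.
pose S := rcosets (Jg k) [set: A].
have toS_coset g b : toA (Jg k :* b) g = Jg k :* lam (cinv g) b.
  rewrite toA_E; apply/eqP; rewrite eqEcard card_imset; last exact: lam_inj.
  rewrite !card_rcoset leqnn andbT; apply/subsetP => _ /imsetP[x hx ->].
  rewrite mem_rcoset zmodMgE zmodVgE in hx.
  rewrite mem_rcoset.
  by rewrite zmodMgE zmodVgE -lamB; apply: J_lam.
have actsS : [acts [set: G], on S | toA].
  apply/subsetP => g _; rewrite !inE; apply/subsetP => X HX; rewrite inE.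
  case/rcosetsP: HX => b _ ->; rewrite toS_coset.
  by apply/rcosetsP; exists (lam (cinv g) b); rewrite ?inE.
have JS : (Jg k : {set A}) \in S.
  by apply/rcosetsP; exists 1%g; rewrite ?inE // rcoset1.
have JF : (Jg k : {set A}) \in 'Fix_(S | toA)([set: G]).
  rewrite inE JS /=; apply/afixP => g _; rewrite toA_E; exact: Jl.
have pS : (p %| #|S|)%N.
  have : (#|S| %| p ^ n)%N by rewrite -cardA -cardsT; apply: dvdn_indexg.
  move=> hd; have [m _ hm] := elimT (dvdn_pfactor _ _ pr) hd.
  case: m hm => [|m] hm.
    exfalso; move: hm; rewrite expn0 => /eqP; rewrite indexg_eq1 => sT.
    by move/negP: hJ; apply; rewrite eqEsubset subsetT.
  by rewrite hm expnS dvdn_mulr.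
have pF : (p %| #|'Fix_(S | toA)([set: G])|)%N.
  by rewrite /dvdn -(pgroup_fix_mod pG actsS); exact: pS.
have nsub : ~~ ('Fix_(S | toA)([set: G]) \subset [set (Jg k : {set A})]).
  apply/negP => sub; have := subset_leq_card sub; rewrite cards1 => le1.
  have pos : (0 < #|'Fix_(S | toA)([set: G])|)%N.
    by apply/card_gt0P; exists (Jg k : {set A}).
  by have := leq_trans (dvdn_leq pos pF) le1; rewrite leqNgt prime_gt1.
case/subsetPn: nsub => X HX nX.
case/setIP: HX => /rcosetsP[b _ Xb] /afixP XF.
exists b.
  apply/inJSP => c.
  have hf := XF (cinv c) (in_setT _).
  rewrite toA_E cinvK Xb in hf.
  have : lam c b \in Jg k :* b by rewrite -hf; apply: imset_f; exact: rcoset_refl.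
  by move=> h; rewrite mem_rcoset zmodMgE zmodVgE -starE in h.
by apply/negP => hb; move: nX; rewrite Xb rcoset_id // in_set1 eqxx.
Qed.
Local Close Scope group_scope.

Lemma J_card k : (k <= n)%N -> Jset k = [set: A] \/ (p ^ k %| #|Jset k|)%N.
Proof.
elim: k => [|k IH] hk; first by right; rewrite expn0 dvd1n.
have [hT|hT] := eqVneq (Jset k) [set: A].
  left; apply/eqP; rewrite eqEsubset subsetT /= -hT; exact: J_mono.
case: (IH (ltnW hk)) => [hT'|dk]; first by rewrite hT' eqxx in hT.
right.
have [b hb1 hb0] := J_grow hT.
have prop : Jset k \proper Jset k.+1.
  by rewrite properE J_mono /=; apply/subsetPn; exists b.
have lt := proper_card prop.
have dA m : (#|Jset m| %| p ^ n)%N.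
  rewrite -cardA -cardsT; apply: (@cardSg _ [set: A]%G (Jg m)); exact: subsetT.
have [a _ ha] := elimT (dvdn_pfactor _ _ pr) (dA k).
have [c _ hc] := elimT (dvdn_pfactor _ _ pr) (dA k.+1).
rewrite hc dvdn_Pexp2l ?prime_gt1 //.
rewrite ha hc ltn_exp2l ?prime_gt1 // in lt.
rewrite ha dvdn_Pexp2l ?prime_gt1 // in dk.
exact: leq_ltn_trans dk lt.
Qed.

Lemma J_full : Jset n = [set: A].
Proof.
case: (J_card (leqnn n)) => // dk.
apply/eqP; rewrite eqEcard subsetT cardsT cardA /=.
apply: dvdn_leq dk; apply/card_gt0P; exists 0; exact: (asg0 (asgJ n)).
Qed.

Lemma Jall w : w \in Jset n.
Proof. by rewrite J_full inE. Qed.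

Lemma nilN y t w : (n <= t)%N -> iter t (star y) w = 0.
Proof.
move=> ht; have := iter_star_J y t (Jall w).
have -> : (n - t = 0)%N by apply/eqP; rewrite subn_eq0.
by rewrite inJ0 => /eqP.
Qed.

Lemma hNJ k w t : w \in Jset k.+1 -> (0 < t)%N -> iter t (star w) w \in Jset k.
Proof.
move=> hw ht; have := iter_star_J w t hw.
apply: (subsetP (J_le _)); lia.
Qed.

Lemma N_Mn y t w m : iter t (star y) (w *+ m) = iter t (star y) w *+ m.
Proof. by elim: t => [|t IH] //=; rewrite IH starMn. Qed.

Lemma pow0 y : circ_pow circ e y 0 = e. Proof. by []. Qed.
Lemma powS y m : circ_pow circ e y m.+1 = circ y (circ_pow circ e y m). Proof. by []. Qed.

Lemma lam_pow y m w : lam (circ_pow circ e y m) w = iter m (lam y) w.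
Proof.
elim: m => [|m IH]; first by rewrite pow0 lam1.
by rewrite powS lamM IH.
Qed.

Lemma iter_lam_binom y m w :
  iter m (lam y) w = \sum_(0 <= t < m.+1) iter t (star y) w *+ 'C(m, t).
Proof.
elim: m => [|m IH].
  by rewrite big_nat_recl // big_geq // bin0 mulr1n addr0.
have h1 : \sum_(0 <= t < m.+1) iter t (star y) w *+ 'C(m, t)
   = w + \sum_(0 <= t < m) iter t.+1 (star y) w *+ 'C(m, t.+1).
  by rewrite big_nat_recl // bin0 mulr1n.
have h2 : \sum_(0 <= t < m.+1) iter t.+1 (star y) w *+ 'C(m, t.+1)
   = \sum_(0 <= t < m) iter t.+1 (star y) w *+ 'C(m, t.+1).
  by rewrite big_nat_recr //= bin_small // mulr0n addr0.
have h3 : \sum_(0 <= t < m.+2) iter t (star y) w *+ 'C(m.+1, t)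
   = w + (\sum_(0 <= t < m) iter t.+1 (star y) w *+ 'C(m, t.+1)
          + \sum_(0 <= t < m.+1) iter t.+1 (star y) w *+ 'C(m, t)).
  rewrite big_nat_recl // bin0 mulr1n -h2 -big_split; congr (_ + _).
  by apply: eq_bigr => t _; rewrite binS mulrnDr.
rewrite iterS IH (big_morph _ (lamD y) (lam0 y)).
under eq_bigr do rewrite lamMn lamE mulrnDl.
by rewrite big_split /= h1 h3 addrA.
Qed.

Lemma pow_binom y m :
  circ_pow circ e y m = \sum_(0 <= t < m) iter t (star y) y *+ 'C(m, t.+1).
Proof.
elim: m => [|m IH]; first by rewrite pow0 big_geq // e0.
have h3 : \sum_(0 <= t < m.+1) iter t (star y) y *+ 'C(m.+1, t.+1)
   = \sum_(0 <= t < m) iter t (star y) y *+ 'C(m, t.+1)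
     + (y + \sum_(0 <= t < m) iter t.+1 (star y) y *+ 'C(m, t.+1)).
  under eq_bigr do rewrite binS mulrnDr.
  rewrite big_split /= big_nat_recr //= bin_small // mulr0n addr0.
  by rewrite big_nat_recl // bin0 mulr1n.
rewrite powS circE IH (big_morph _ (lamD y) (lam0 y)).
under eq_bigr do rewrite lamMn lamE mulrnDl.
by rewrite big_split /= h3 addrCA.
Qed.

Lemma bin_pdiv i t : (0 < t < p)%N -> (p ^ i %| 'C(p ^ i, t))%N.
Proof.
case/andP => t0 tp.
have := mul_bin_diag (p ^ i) t.-1; rewrite prednK // => h.
have cop : coprime (p ^ i) t by apply: coprimeXl; rewrite prime_coprime // gtnNdvd.
by rewrite -(Gauss_dvdr _ cop) -h dvdn_mulr.
Qed.

Lemma pow_decomp (W : {set A}) y i : is_add_subgroup W ->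
  (forall t, (0 < t)%N -> iter t (star y) y \in W) ->
  exists2 r, r \in W & circ_pow circ e y (p ^ i) = (y + r) *+ p ^ i.
Proof.
move=> hW hN.
have m0 : (0 < p ^ i)%N by rewrite expn_gt0 prime_gt0.
pose c t := ('C(p ^ i, t.+1) %/ p ^ i)%N.
have term t : iter t (star y) y *+ 'C(p ^ i, t.+1) = (iter t (star y) y *+ c t) *+ p ^ i.
  case: (ltnP t n) => ht.
    rewrite -mulrnA divnK //; apply: bin_pdiv; apply/andP; split => //; lia.
  by rewrite nilN // !mul0rn.
rewrite pow_binom (eq_bigr _ (fun t _ => term t)) sumrMnl.
exists (\sum_(1 <= t < p ^ i) iter t (star y) y *+ c t).
  rewrite big_nat_cond; apply: asg_sumP => // t /andP[/andP[t1 _] _].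
  by apply: asgMn => //; apply: hN.
rewrite big_ltn //; congr (_ *+ _); congr (_ + _).
by rewrite /c bin1 divnn m0 mulr1n.
Qed.

Lemma M_mul1 k x : x \in mult_set A (p ^ k) -> x *+ p \in mult_set A (p ^ k.+1).
Proof. by case/MP => z ->; rewrite -mulrnA -expnSr inM. Qed.

Lemma M_mul s t x : x \in mult_set A (p ^ s) -> x *+ p ^ t \in mult_set A (p ^ (s + t)).
Proof. by case/MP => z ->; rewrite -mulrnA -expnD inM. Qed.

Lemma Epow k y : (forall x, star y x \in mult_set A (p ^ k)) ->
  forall x, star (circ_pow circ e y p) x \in mult_set A (p ^ k.+1).
Proof.
move=> hy x; rewrite starE lam_pow iter_lam_binom big_nat_recl // bin0 mulr1n.
rewrite addrC addKr big_nat_cond; apply: asg_sumP; first exact: asgM.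
move=> t /andP[/andP[_ tp] _].
case: (ltnP t.+1 p) => ht.
  have hd : (p %| 'C(p, t.+1))%N.
    by have := bin_pdiv 1 (t:=t.+1); rewrite expn1; apply; apply/andP.
  rewrite -(divnK hd) mulrnA; apply: M_mul1; apply: asgMn; first exact: asgM.
  exact: hy.
by rewrite nilN ?mul0rn; [exact: (asg0 (asgM _)) | lia].
Qed.

Lemma Ecirc s u w : (forall x, star u x \in mult_set A s) ->
  (forall x, star w x \in mult_set A s) -> forall x, star (circ u w) x \in mult_set A s.
Proof.
move=> hu hw x; rewrite starCirc.
by apply: asgD; [exact: asgM | apply: M_lam; exact: hw | exact: hu].
Qed.

Lemma B1 k y : y \in Jset k -> forall x, star (y *+ p) x \in mult_set A (p ^ 1).
Proof.
elim: k y => [|k IH] y hy x.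
  by move: hy; rewrite inJ0 => /eqP->; rewrite mul0rn star0l; exact: (asg0 (asgM _)).
have [r hr hpow] := pow_decomp 1 (asgJ k) (fun t ht => hNJ hy ht).
rewrite expn1 in hpow.
have -> : y *+ p = circ (circ_pow circ e y p)
                      (lam (cinv (circ_pow circ e y p)) ((- r) *+ p)).
  by rewrite -addE hpow mulrnDl mulNrn addrK.
apply: Ecirc.
  apply: Epow => z; rewrite expn0; exact: M1.
move=> z; rewrite lamMn; apply: IH; apply: J_lam; exact: asgN (asgJ k) hr.
Qed.

Lemma zA (z : A) : z *+ p ^ n = 0.
Proof. by rewrite -cardA -cardsT -zmodXgE expg_cardG ?inE. Qed.

Lemma Dk k : (0 < k)%N -> forall s, (k <= s)%N ->
  forall y x, star (y *+ p ^ s) x \in mult_set A (p ^ k).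
Proof.
elim: k => [//|k IHk] _ s ks y x.
case: k IHk ks => [|k] IHk ks.
  case: s ks => // s _; rewrite expnSr mulrnA; exact: B1 (Jall _) x.
suff H : forall d s, (n - s <= d)%N -> (k.+2 <= s)%N ->
  forall y x, star (y *+ p ^ s) x \in mult_set A (p ^ k.+2) by exact: (H (n - s)%N).
clear ks x y s.
elim=> [|d IHd] s hd hs y x.
  have -> : y *+ p ^ s = 0.
    by rewrite -(subnK (_ : n <= s)%N) ?expnD ?mulrnA ?zA ?mul0rn //; lia.
  by rewrite star0l; exact: (asg0 (asgM _)).
case: (leqP n s) => hns.
  have -> : y *+ p ^ s = 0 by rewrite -(subnK hns) expnD mulrnA zA.
  by rewrite star0l; exact: (asg0 (asgM _)).
case: s hd hs hns => [//|s] hd hs hns.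
have Ek : forall z, star (y *+ p ^ s) z \in mult_set A (p ^ k.+1).
  by move=> z; apply: IHk => //; lia.
have hN : forall t, (0 < t)%N ->
    iter t (star (y *+ p ^ s)) (y *+ p ^ s) \in mult_set A (p ^ (k.+1 + s)).
  move=> [//|t] _; rewrite N_Mn; apply: M_mul; exact: Ek.
have [r hr hpow] := pow_decomp 1 (asgM _) hN.
rewrite expn1 in hpow.
rewrite expnSr mulrnA.
have -> : y *+ p ^ s *+ p = circ (circ_pow circ e (y *+ p ^ s) p)
           (lam (cinv (circ_pow circ e (y *+ p ^ s) p)) ((- r) *+ p)).
  by rewrite -addE hpow mulrnDl mulNrn addrK.
apply: Ecirc; first exact: Epow Ek.
move=> z.
have : lam (cinv (circ_pow circ e (y *+ p ^ s) p)) ((- r) *+ p)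
   \in mult_set A (p ^ (k.+1 + s).+1).
  by apply: M_lam; apply: M_mul1; exact: asgN (asgM _) hr.
case/MP => y' ->; apply: IHd; lia.
Qed.

Lemma Ei i x : x \in mult_set A (p ^ i) -> forall b, star x b \in mult_set A (p ^ i).
Proof.
case: i => [|i]; first by move=> _ b; rewrite expn0; exact: M1.
by case/MP => y -> b; apply: Dk.
Qed.

Lemma M_circ_sub i : is_circ_subgroup circ e cinv (mult_set A (p ^ i)).
Proof.
apply/and3P; split.
- by rewrite e0; exact: (asg0 (asgM _)).
- apply/forallP => x; apply/implyP => hx; apply/forallP => y; apply/implyP => hy.
  rewrite circE; apply: asgD; [exact: asgM | exact: hx | exact: M_lam].
- apply/forallP => x; apply/implyP => hx.
  have h := circVr x; rewrite circE e0 addrC in h.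
  move/eqP: h; rewrite addr_eq0 => /eqP h.
  have -> : cinv x = lam (cinv x) (- x) by rewrite -h lamK.
  by apply: M_lam; exact: asgN (asgM _) hx.
Qed.

Lemma ideal_part i : is_ideal circ e cinv (mult_set A (p ^ i)).
Proof.
split.
- exact: asgM.
- split; first exact: M_circ_sub.
  move=> a x hx; rewrite conjE; apply: M_lam.
  by apply: asgD; [exact: asgM | exact: hx | exact: Ei].
- move=> a x hx; exact: M_star.
Qed.

Lemma gen_part i : circ_gen circ e cinv [set circ_pow circ e a (p ^ i) | a : A]
    = mult_set A (p ^ i).
Proof.
apply/setP => z; rewrite inE; apply/idP/idP.
  move/forallP/(_ (mult_set A (p ^ i)))/implyP; apply; apply/andP; split.
    exact: M_circ_sub.
  apply/subsetP => _ /imsetP[a _ ->].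
  have [r _ ->] := pow_decomp i asgT (fun t _ => in_setT (iter t (star a) a)).
  exact: inM.
case/MP => y ->; apply/forallP => S; apply/implyP => /andP[hS sub].
move/and3P: hS => [eS cS iS].
have cS' : forall x y, x \in S -> y \in S -> circ x y \in S.
  move=> x0 y0 hx hy; move/forallP/(_ x0): cS; rewrite hx /= => /forallP/(_ y0).
  by rewrite hy.
suff H : forall k w, w \in Jset k -> w *+ p ^ i \in S by exact: H _ _ (Jall y).
elim=> [|k IH] w hw.
  by rewrite inJ0 in hw; rewrite (eqP hw) mul0rn -e0.
have [r hr hpow] := pow_decomp i (asgJ k) (fun t ht => hNJ hw ht).
have hu : circ_pow circ e w (p ^ i) \in S.
  by apply: (subsetP sub); apply/imsetP; exists w; rewrite ?inE.
have -> : w *+ p ^ i = circ (circ_pow circ e w (p ^ i))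
           (lam (cinv (circ_pow circ e w (p ^ i))) ((- r) *+ p ^ i)).
  by rewrite -addE hpow mulrnDl mulNrn addrK.
apply: cS' hu _; rewrite lamMn; apply: IH; apply: J_lam; exact: asgN (asgJ k) hr.
Qed.

End Main.

Theorem proposition13 (i n p : nat) (A : finZmodType)
    (circ : A -> A -> A) (e : A) (cinv : A -> A) :
  is_brace circ e cinv -> prime p -> (p > n.+1)%N -> #|A| = (p ^ n)%N ->
  is_ideal circ e cinv (mult_set A (p ^ i)) /\
  circ_gen circ e cinv [set circ_pow circ e a (p ^ i) | a : A]
    = mult_set A (p ^ i).
Proof.
move=> hB pr pn cA; split; [apply: ideal_part | apply: gen_part]; eassumption.
Qed.
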